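(* Let $g:M^{3\times3}\times M^{3\times3}\times[0,\infty)\to(-\infty,\infty]$ be convex, real-valued on $M^{3\times3}\times M^{3\times3}\times(0,\infty)$, and satisfy $g(RA,RH,\delta)=g(A,H,\delta)$ for all $R\in SO(3)$, $A,H\in M^{3\times3}$, $\delta\ge0$. Suppose $\psi(A):=g(A,\operatorname{cof}A,\det A)$, $A\in M^{3\times3}_+$, satisfies $\psi(A_j)\to\infty$ for every sequence $A_j\in M^{3\times3}_+$ with $\det A_j\to0+$. Then the set $\{(A,H)\in M^{3\times3}\times M^{3\times3}: g(A,H,0)<\infty\}$ has empty interior.
   Context: $M^{3\times3}$ is the space of real $3\times3$ matrices, $M^{3\times3}_+=\{A:\det A>0\}$, $\operatorname{cof}A$ is the cofactor matrix of $A$, $SO(3)$ is the rotation group. *)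

(* Defs.v *)
From HB Require Import structures.
From mathcomp Require Import all_boot all_order all_algebra.
From mathcomp Require Import all_classical all_reals all_analysis.
Set Implicit Arguments. Unset Strict Implicit. Unset Printing Implicit Defensive.
Import Order.TTheory GRing.Theory Num.Theory.
Import numFieldNormedType.Exports.
Local Open Scope classical_set_scope.
Local Open Scope ring_scope.

Definition cof (R : comNzRingType) (A : 'M[R]_3) : 'M[R]_3 :=
  \matrix_(i, j) cofactor A i j.

Definition SO3 (R : comNzRingType) (Q : 'M[R]_3) : Prop :=
  Q^T *m Q = 1%:M /\ \det Q = 1.

Definition convex_g (R : realType) (g : 'M[R]_3 -> 'M[R]_3 -> R -> \bar R) : Prop :=
  forall (A1 H1 A2 H2 : 'M[R]_3) (d1 d2 t : R),
    0 <= d1 -> 0 <= d2 -> 0 <= t <= 1 ->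
    let A := t *: A1 + (1 - t) *: A2 in
    let H := t *: H1 + (1 - t) *: H2 in
    let d := t * d1 + (1 - t) * d2 in
    (g A H d <= t%:E * g A1 H1 d1 + (1 - t)%:E * g A2 H2 d2)%E.

(* Main.v *)
Require Import Defs.
From HB Require Import structures.
From mathcomp Require Import all_boot all_order all_algebra.
From mathcomp Require Import all_classical all_reals all_analysis.
From mathcomp Require Import ring lra.
Import Order.TTheory GRing.Theory Num.Theory.
Import numFieldNormedType.Exports.
Local Open Scope classical_set_scope.
Local Open Scope ring_scope.

Section M.
Variable R : realType.
Definition dg (a b c : R) : 'M[R]_3 :=
  \matrix_(i, j) ((nth 0 [:: a; b; c] i) *+ (i == j)).

Lemma dgE a b c : dg a b c = diag_mx (\row_(i < 3) nth 0 [:: a; b; c] i).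
Proof. by apply/matrixP => i j; rewrite !mxE. Qed.

Ltac ord3 i := case: i => [[|[|[|?]]] ?] //=.

Lemma dg_lin s t a b c a' b' c' :
  s *: dg a b c + t *: dg a' b' c' = dg (s*a+t*a') (s*b+t*b') (s*c+t*c').
Proof.
apply/matrixP => i j; rewrite !mxE.
ord3 i; ord3 j; rewrite ?mulr0n ?mulr1n ?mulr0 ?addr0 //.
Qed.

Lemma dg_mul a b c a' b' c' :
  dg a b c *m dg a' b' c' = dg (a*a') (b*b') (c*c').
Proof.
rewrite !dgE mul_diag_mx; apply/matrixP => i j; rewrite !mxE.
ord3 i; ord3 j; rewrite ?mulr0n ?mulr1n ?mulr0 //.
Qed.

Lemma dg1 : dg 1 1 1 = 1.
Proof.
apply/matrixP => i j; rewrite !mxE.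
by ord3 i; ord3 j.
Qed.

Lemma dg_scalar k : dg k k k = k%:M.
Proof.
apply/matrixP => i j; rewrite !mxE.
by ord3 i; ord3 j.
Qed.

Lemma det_dg a b c : \det (dg a b c) = a * b * c.
Proof.
rewrite dgE det_diag !big_ord_recr big_ord0 /= !mxE /=.
by rewrite mul1r.
Qed.

Lemma tr_dg a b c : (dg a b c)^T = dg a b c.
Proof. by rewrite dgE tr_diag_mx. Qed.

Lemma cof_dg a b c : a != 0 -> b != 0 -> c != 0 ->
  cof (dg a b c) = dg (b*c) (a*c) (a*b).
Proof.
move=> a0 b0 c0.
have Hu : dg a b c \in unitmx.
  by rewrite unitmxE det_dg unitfE !mulf_neq0.
have E : dg a b c *m \adj (dg a b c) = dg a b c *m dg (b*c) (a*c) (a*b).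
  rewrite mul_mx_adj dg_mul det_dg -dg_scalar; congr dg; ring.
have E2 : \adj (dg a b c) = dg (b*c) (a*c) (a*b).
  by have := congr1 (mulmx (invmx (dg a b c))) E; rewrite !mulmxA mulVmx // !mul1mx.
apply/matrixP => i j; rewrite !mxE.
have := congr1 (fun M : 'M[R]_3 => M j i) E2.
rewrite /adjugate !mxE => ->.
by ord3 i; ord3 j.
Qed.
Lemma dg_scale k a b c : k *: dg a b c = dg (k*a) (k*b) (k*c).
Proof.
apply/matrixP => i j; rewrite !mxE.
ord3 i; ord3 j; rewrite ?mulr0n ?mulr1n ?mulr0 //.
Qed.

Lemma dg_add a b c a' b' c' : dg a b c + dg a' b' c' = dg (a+a') (b+b') (c+c').
Proof.
apply/matrixP => i j; rewrite !mxE.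
ord3 i; ord3 j; rewrite ?mulr0n ?mulr1n ?addr0 //.
Qed.

Lemma dg0 : dg 0 0 0 = 0.
Proof. apply/matrixP => i j; rewrite !mxE. by ord3 i; ord3 j. Qed.

Lemma avg4 (a b c d S : 'M[R]_3) : a + b + c + d = 0 ->
  2^-1 *: (2^-1 *: (a + S) + (1 - 2^-1) *: (b + S)) +
  (1 - 2^-1) *: (2^-1 *: (c + S) + (1 - 2^-1) *: (d + S)) = S.
Proof.
move=> h; apply/matrixP => i j.
have := congr1 (fun M : 'M[R]_3 => M i j) h; rewrite !mxE => h'.
have -> : d i j = - (a i j + b i j + c i j) by lra.
lra.
Qed.

Lemma SO3_dg a b c : a * a = 1 -> b * b = 1 -> c * c = 1 -> a * b * c = 1 ->
  SO3 (dg a b c) /\ dg a b c *m dg a b c = 1.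
Proof.
move=> ha hb hc habc.
have E : dg a b c *m dg a b c = 1 by rewrite dg_mul ha hb hc dg1.
by split => //; split; rewrite ?tr_dg ?E ?det_dg.
Qed.
End M.
Arguments dg {R}.

Lemma bound_aux (R : realType) (s c1 c2 : R) : 0 < s -> s <= 1 ->
  `|c1| + `|c2| + 1 <= s * c1 + (1 - s) * c2 -> False.
Proof.
move=> s0 s1 h.
have n1 : - c1 <= `|c1| by rewrite -normrN ler_norm.
have n2 : - c2 <= `|c2| by rewrite -normrN ler_norm.
have m1 := ler_norm c1; have m2 := ler_norm c2.
nra.
Qed.

Theorem mainTheorem17 (R : realType) (g : 'M[R]_3 -> 'M[R]_3 -> R -> \bar R) :
  (* g takes values in (-oo, +oo] on M x M x [0, oo) *)
  (forall A H d, 0 <= d -> g A H d != -oo%E) ->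
  convex_g g ->
  (* real-valued on M x M x (0, oo) *)
  (forall A H d, 0 < d -> g A H d \is a fin_num) ->
  (* frame indifference *)
  (forall Q A H d, SO3 Q -> 0 <= d -> g (Q *m A) (Q *m H) d = g A H d) ->
  (* psi(A) = g(A, cof A, det A) blows up as det A -> 0+ *)
  (forall u : nat -> 'M[R]_3, (forall j, 0 < \det (u j)) ->
     (fun j => \det (u j)) @ \oo --> 0 ->
     (fun j => g (u j) (cof (u j)) (\det (u j))) @ \oo --> +oo%E) ->
  interior [set p : 'M[R]_3 * 'M[R]_3 | (g p.1 p.2 0%R < +oo)%E] = set0.
Proof.
move=> gninf gconv gfin gframe gblow.
apply/seteqP; split => // -[A0 H0] Hx; rewrite /interior /= in Hx.
set U := [set p : 'M[R]_3 * 'M[R]_3 | (g p.1 p.2 0%R < +oo)%E] in Hx.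
set D := dg 0 1 (1:R). set E := dg 1 0 (0:R).
pose phi (Q : 'M[R]_3) (e : R) := (A0 + e *: (Q *m D), H0 + (e * e) *: (Q *m E)).
have cvgphi Q : phi Q e @[e --> (0:R)] --> (A0, H0).
  have c1 : (A0 + e *: (Q *m D)) @[e --> (0:R)] --> A0.
    have := @cvgD _ _ _ _ _ (fun _ => A0) (fun e : R => e *: (Q *m D)) A0 (0 *: (Q *m D))
      (cvg_cst _) (cvgZ cvg_id (cvg_cst _)).
    by move=> h; rewrite scale0r addr0 in h; exact: h.
  have c2 : (H0 + (e * e) *: (Q *m E)) @[e --> (0:R)] --> H0.
    have := @cvgD _ _ _ _ _ (fun _ => H0) (fun e : R => (e * e) *: (Q *m E)) H0 ((0*0) *: (Q *m E))
      (cvg_cst _) (cvgZ (cvgM cvg_id cvg_id) (cvg_cst _)).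
    by move=> h; rewrite mul0r scale0r addr0 in h; exact: h.
  exact: (cvg_pair c1 c2).
set Q0 : 'M[R]_3 := dg 1 1 1. set Q1 : 'M[R]_3 := dg 1 (-1) (-1).
set Q2 : 'M[R]_3 := dg (-1) 1 (-1). set Q3 : 'M[R]_3 := dg (-1) (-1) 1.
have [S0 QQ0] : SO3 Q0 /\ Q0 *m Q0 = 1 by apply: SO3_dg; ring.
have [S1 QQ1] : SO3 Q1 /\ Q1 *m Q1 = 1 by apply: SO3_dg; ring.
have [S2 QQ2] : SO3 Q2 /\ Q2 *m Q2 = 1 by apply: SO3_dg; ring.
have [S3 QQ3] : SO3 Q3 /\ Q3 *m Q3 = 1 by apply: SO3_dg; ring.
have hall : nbhs (0:R) (fun e => U (phi Q0 e) /\ U (phi Q1 e) /\ U (phi Q2 e) /\ U (phi Q3 e)).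
  apply: filterI; first exact: (cvgphi Q0 _ Hx).
  apply: filterI; first exact: (cvgphi Q1 _ Hx).
  apply: filterI; first exact: (cvgphi Q2 _ Hx).
  exact: (cvgphi Q3 _ Hx).
move/nbhs_ballP: hall => -[r r0 hr].
set e := r / 2.
have e0 : 0 < e by rewrite /e divr_gt0.
have : ball (0:R) r e.
  rewrite -ball_normE /ball_ /= sub0r normrN ger0_norm ?(ltW e0) //.
  by rewrite /e ltr_pdivrMr // ltr_pMr // ltr1n.
move=> /hr [U0 [U1 [U2 U3]]].
have frame Q : SO3 Q -> Q *m Q = 1 -> U (phi Q e) ->
    (g (Q *m A0 + e *: D)%R (Q *m H0 + (e * e) *: E)%R 0%R < +oo)%E.
  move=> SQ QQ; rewrite /U /phi /= -(gframe Q) //.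
  by rewrite !mulmxDr -!scalemxAr !mulmxA QQ !mul1mx.
have mid X1 Y1 X2 Y2 : (g X1 Y1 0%R < +oo)%E -> (g X2 Y2 0%R < +oo)%E ->
    (g (2^-1 *: X1 + (1 - 2^-1) *: X2)%R (2^-1 *: Y1 + (1 - 2^-1) *: Y2)%R 0%R < +oo)%E.
  move=> h1 h2.
  have := gconv X1 Y1 X2 Y2 0 0 (2^-1) (lexx _) (lexx _).
  rewrite /= !mulr0 addr0 => /(_ _)/le_lt_trans; apply.
    by apply/andP; split; lra.
  apply: lte_add_pinfty; apply: lte_mul_pinfty => //; rewrite lee_fin; lra.
have sumQ : Q0 + Q1 + Q2 + Q3 = 0.
  rewrite /Q0 /Q1 /Q2 /Q3 !dg_add -dg0; congr dg; ring.
have sA : Q0 *m A0 + Q1 *m A0 + Q2 *m A0 + Q3 *m A0 = 0.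
  by rewrite -!mulmxDl sumQ mul0mx.
have sH : Q0 *m H0 + Q1 *m H0 + Q2 *m H0 + Q3 *m H0 = 0.
  by rewrite -!mulmxDl sumQ mul0mx.
have fP : (g (dg 0 e e)%R (dg (e * e) 0 0)%R 0%R < +oo)%E.
  have := mid _ _ _ _ (mid _ _ _ _ (frame _ S0 QQ0 U0) (frame _ S1 QQ1 U1))
                      (mid _ _ _ _ (frame _ S2 QQ2 U2) (frame _ S3 QQ3 U3)).
  by rewrite (@avg4 R _ _ _ _ _ sA) (@avg4 R _ _ _ _ _ sH) /D /E !dg_scale !mulr0 !mulr1.
have fB : g (dg 1 e e) (dg (e * e) e e) (e * e) \is a fin_num.
  by apply: gfin; rewrite mulr_gt0.
have fP' : g (dg 0 e e) (dg (e * e) 0 0) 0 \is a fin_num.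
  by rewrite fin_numE gninf ?lexx //= (lt_eqF fP).
set c1 := fine (g (dg 1 e e) (dg (e * e) e e) (e * e)).
set c2 := fine (g (dg 0 e e) (dg (e * e) 0 0) 0).
pose u j := dg (harmonic j) e e.
have hpos j : 0 < \det (u j) by rewrite det_dg !mulr_gt0 ?harmonic_gt0.
have hdet : (fun j => \det (u j)) @ \oo --> (0:R).
  have -> : (fun j => \det (u j)) = (fun j => harmonic j * e * e).
    by apply/funext => j; rewrite det_dg.
  have := cvgM (cvgM (@cvg_harmonic R) (cvg_cst e)) (cvg_cst e).
  by move=> h; rewrite !mul0r in h; exact: h.
move/cvgeyPge: (gblow u hpos hdet) => /(_ (`|c1| + `|c2| + 1)) /filter_ex [j hj].
pose s : R := harmonic j.
have s0 : 0 < s by exact: harmonic_gt0.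
have s1 : s <= 1 by rewrite /s /= invf_le1 // ler1n.
have := gconv (dg 1 e e) (dg (e * e) e e) (dg 0 e e) (dg (e * e) 0 0) (e * e) 0 s.
move=> /(_ (ltW (mulr_gt0 e0 e0)) (lexx _)).
have hs : 0 <= s <= 1 by apply/andP; split; [exact: ltW|].
move=> /(_ hs) /=.
rewrite !dg_lin.
have -> : dg (s * 1 + (1 - s) * 0) (s * e + (1 - s) * e) (s * e + (1 - s) * e) = u j.
  by rewrite /u; congr dg; rewrite -/s; ring.
have -> : dg (s * (e * e) + (1 - s) * (e * e)) (s * e + (1 - s) * 0) (s * e + (1 - s) * 0)
    = cof (u j).
  by rewrite /u cof_dg ?gt_eqF //; congr dg; rewrite -/s; ring.
have -> : s * (e * e) + (1 - s) * 0 = \det (u j).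
  by rewrite det_dg -/s; ring.
rewrite -(fineK fB) -(fineK fP') -/c1 -/c2 -!EFinM -EFinD.
move=> /(le_trans hj); rewrite lee_fin => h.
exact: (@bound_aux R s c1 c2 s0 s1 h).
Qed.
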